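(* Let $X$ be an infinite Hausdorff space. Then every finite rooted tree, equipped with the topology whose open sets are its upward closed subsets, is the image of a continuous surjection from $X$.
   Context: A finite rooted tree is a finite partially ordered set $(T,\le)$ with a least element (the root) such that for every $t\in T$ the set $\{s\in T\mid s\le t\}$ is linearly ordered. A subset $U\subseteq T$ is upward closed if $u\in U$ and $u\le v$ imply $v\in U$. *)

(* Defs.v *)
From HB Require Import structures.
From mathcomp Require Import all_boot all_order.
From mathcomp Require Import all_classical all_reals topology.
Set Implicit Arguments. Unset Strict Implicit. Unset Printing Implicit Defensive.
Import Order.TTheory.
Local Open Scope classical_set_scope.
Local Open Scope order_scope.

Definition rooted_tree (d : Order.disp_t) (T : finPOrderType d) : Prop :=
  (exists r : T, forall t : T, r <= t) /\
  (forall t s1 s2 : T, s1 <= t -> s2 <= t -> (s1 <= s2) || (s2 <= s1)).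

Definition upward_closed (d : Order.disp_t) (T : porderType d) (U : set T) : Prop :=
  forall u v : T, U u -> u <= v -> U v.

Definition upset_continuous (X : topologicalType) (d : Order.disp_t)
    (T : porderType d) (f : X -> T) : Prop :=
  forall U : set T, upward_closed U -> open (f @^-1` U).

(* Main.v *)
Require Import Defs.
From HB Require Import structures.
From mathcomp Require Import all_boot all_order.
From mathcomp Require Import all_classical all_reals topology.
Local Open Scope classical_set_scope.

Section Aux.
Variable X : topologicalType.
Hypothesis hX : hausdorff_space X.

Definition stepP (W : set X) (p : set X * set X) :=
  [/\ open p.1, p.1 !=set0, open p.2 & infinite_set p.2] /\
  [/\ p.1 `<=` W, p.2 `<=` W & p.1 `&` p.2 = set0].

Lemma step_ex (W : set X) : open W -> infinite_set W -> exists p, stepP W p.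
Proof.
move=> oW iW.
have [a Wa] := infinite_setN0 iW.
have iWa : infinite_set (W `\` [set a]) by apply: infinite_setD => //; exact: finite_set1.
have [b [Wb /= nba]] := infinite_setN0 iWa.
have ab : a != b by apply/eqP => ab; apply: nba; rewrite ab.
move: hX; rewrite open_hausdorff => /(_ a b ab) [[A B] /= [aA bB] [oA oB /eqP AB0]].
rewrite inE in aA; rewrite inE in bB.
have [fin|inf] := pselect (finite_set (W `&` A)).
- exists (W `&` A, W `\` (W `&` A)); split; split => //=.
  + exact: openI.
  + by exists a.
  + rewrite setDE; apply: openI => //; apply: closed_openC.
    have := @accessible_finite_set_closed X; move=> [+ _].
    by move=> /(_ (hausdorff_accessible hX)); apply.
  + exact: infinite_setD.
  all: try by move=> x [].
  by rewrite setDE setICA setICr setI0.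
- exists (W `&` B, W `&` A); split; split => //=.
  + exact: openI.
  + by exists b.
  + exact: openI.
  all: try by move=> x [].
  by rewrite setIACA setIid [B `&` A]setIC AB0 setI0.
Qed.

Lemma disj_family : infinite_set [set: X] ->
  exists V : nat -> set X, (forall n, open (V n)) /\ (forall n, V n !=set0) /\
    (forall m n, m <> n -> V m `&` V n = set0).
Proof.
move=> iX.
have ex W : exists p, open W -> infinite_set W -> stepP W p.
  have [[o i]|h] := pselect (open W /\ infinite_set W).
    by have [p hp] := step_ex W o i; exists p.
  by exists (set0, set0) => o i; exfalso; exact: h.
have [g hg] := choice ex.
pose Ws n := iter n (fun W => (g W).2) setT.
have inv n : open (Ws n) /\ infinite_set (Ws n).
  elim: n => [|n [o i]]; first by split => //; exact: openT.
  by have [[]] := hg _ o i.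
have HS n : stepP (Ws n) (g (Ws n)) by have [o i] := inv n; exact: hg.
have dec n k : Ws (k + n) `<=` Ws n.
  elim: k => [//|k IH] x /= Hx; apply: IH.
  by have [_ [_ + _]] := HS (k + n); apply.
exists (fun n => (g (Ws n)).1); split; [|split].
- by move=> n; have [[]] := HS n.
- by move=> n; have [[]] := HS n.
- suff H m n : (m < n)%N -> (g (Ws m)).1 `&` (g (Ws n)).1 = set0.
    move=> m n /eqP; rewrite neq_ltn => /orP [/H //|/H]; by rewrite setIC.
  move=> lt; rewrite -subset0 => x [Hm Hn].
  have [_ [_ sub1 D]] := HS m.
  have [_ [sub2 _ _]] := HS n.
  have : Ws n x by apply: sub2.
  rewrite -(subnK lt) => /dec Hx.
  have : ((g (Ws m)).1 `&` (g (Ws m)).2) x by split.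
  by rewrite D.
Qed.
End Aux.

Theorem lemma9p5 (X : topologicalType) (hX : hausdorff_space X)
  (infX : ~ finite_set [set: X])
  (d : Order.disp_t) (T : finPOrderType d) (hT : rooted_tree T) :
  exists f : X -> T, upset_continuous f /\ (forall t : T, exists x : X, f x = t).
Proof.
have [V [oV [nV dV]]] := @disj_family X hX infX.
have [[r hr] _] := hT.
pose f x := odflt r [pick t | (t != r) && `[< V (enum_rank t) x >]].
have fV t x : t != r -> V (enum_rank t) x -> f x = t.
  move=> tr Vx; rewrite /f; case: pickP => [t' /andP [_ /asboolP Vx'] /=|].
    apply/enum_rank_inj/val_inj/eqP; apply: contraT => /eqP ne.
    have : (V (enum_rank t') `&` V (enum_rank t)) x by split.
    by rewrite dV.
  by move=> /(_ t) /=; rewrite tr /=; move/asboolPn.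
have fr x : V #|T| x -> f x = r.
  move=> Vx; rewrite /f; case: pickP => [t' /andP [_ /asboolP Vx'] /=|//].
  have : (V (enum_rank t') `&` V #|T|) x by split.
  rewrite dV // => E; have := ltn_ord (enum_rank t'); by rewrite E ltnn.
exists f; split.
- move=> U hU.
  have [Ur|Unr] := pselect (U r).
    have -> : f @^-1` U = setT by apply/seteqP; split => // x _; apply: hU (hr _).
    exact: openT.
  have -> : f @^-1` U = \bigcup_(t in U) V (enum_rank t).
    apply/seteqP; split => x /=.
    + rewrite /f; case: pickP => [t /andP [_ /asboolP Vx] /= Ut|_ /= //].
      by exists t.
    + move=> [t Ut Vx]; rewrite (fV t) //; apply/eqP => tr; apply: Unr; by rewrite -tr.
  by apply: bigcup_open => t _; exact: oV.
- move=> t; have [tr|tr] := eqVneq t r.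
    have [x Vx] := nV #|T|; exists x; rewrite tr; exact: fr.
  have [x Vx] := nV (enum_rank t); exists x; exact: fV.
Qed.
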